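(* Let $k>0$ and consider the system of ODEs, in cylindrical coordinates $(r,\theta,z)$ on $\mathbb{R}^3$ with momenta $p_R,p_S$, \[ \dot r = p_R,\quad \dot\theta = \frac{p_S}{r^2},\quad \dot z = \frac{p_S}{2},\quad \dot p_R = \frac{p_S^2}{r^3} - \frac{2kr^3}{(r^4+16z^2)^{3/2}},\quad \dot p_S = -\frac{8kr^2 z}{(r^4+16z^2)^{3/2}}, \] with first integrals $H = \frac12\big(p_R^2+\frac{p_S^2}{r^2}\big) - \frac{k}{\sqrt{r^4+16z^2}}$ and $F_3 = (2zp_R-rp_S)^2 + 4z^2\big(\frac{p_S^2}{r^2}+\frac{2k}{\sqrt{r^4+16z^2}}\big)$. Suppose $J := \sqrt{k^2+2HF_3} = 0$ and set $z_0 = \frac{k}{4|H|}$. Then the trajectories of non-stationary solutions are curves monotone in $z$ and in $\theta$ which, parametrized by $z$, have the form \[ r(z) = \Big(2\,\frac{z_0^2-z^2}{z_0}\Big)^{1/2},\qquad \theta(z) = \frac12\log\frac{z_0+z}{z_0-z} + \theta(0),\qquad |z|\le z_0. \] These solutions connect the stationary points $(r,z)=(0,\pm z_0)$ and take infinite time to approach them, i.e. $t(z)\to\pm\infty$ as $z\to\pm z_0$.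
   Context: The system describes nonholonomic motion on the Heisenberg group in the potential $-k/\sqrt{r^4+16z^2}$ in cylindrical coordinates $x=r\cos\theta$, $y=r\sin\theta$. $H$ and $F_3$ are constant along solutions, $F_3\ge0$, and $k^2+2HF_3\ge 0$. *)

(* Defs.v *)
From Stdlib Require Import Reals.
From Coquelicot Require Import Coquelicot.
Open Scope R_scope.

Definition Hfun (k r z pR pS : R) : R :=
  / 2 * (pR ^ 2 + pS ^ 2 / r ^ 2) - k / sqrt (r ^ 4 + 16 * z ^ 2).

Definition F3fun (k r z pR pS : R) : R :=
  (2 * z * pR - r * pS) ^ 2
  + 4 * z ^ 2 * (pS ^ 2 / r ^ 2 + 2 * k / sqrt (r ^ 4 + 16 * z ^ 2)).

(* (r, th, z, pR, pS) is a solution of the system on the open interval (a, b),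
   in the cylindrical chart r > 0.  Note (r^4+16z^2)^(3/2) = D * sqrt D. *)
Definition is_solution (k : R) (a b : Rbar) (r th z pR pS : R -> R) : Prop :=
  forall t : R, Rbar_lt a t -> Rbar_lt t b ->
    let D := r t ^ 4 + 16 * z t ^ 2 in
    0 < r t /\
    is_derive r t (pR t) /\
    is_derive th t (pS t / r t ^ 2) /\
    is_derive z t (pS t / 2) /\
    is_derive pR t (pS t ^ 2 / r t ^ 3 - 2 * k * r t ^ 3 / (D * sqrt D)) /\
    is_derive pS t (- (8 * k * r t ^ 2 * z t) / (D * sqrt D)).

Definition is_maximal_solution (k : R) (a b : Rbar) (r th z pR pS : R -> R) : Prop :=
  is_solution k a b r th z pR pS /\
  forall (a' b' : Rbar) (r' th' z' pR' pS' : R -> R),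
    is_solution k a' b' r' th' z' pR' pS' ->
    Rbar_le a' a -> Rbar_le b b' ->
    (forall t : R, Rbar_lt a t -> Rbar_lt t b ->
       r' t = r t /\ th' t = th t /\ z' t = z t /\ pR' t = pR t /\ pS' t = pS t) ->
    a' = a /\ b' = b.

(* Main.v *)
Require Import Defs.
From Stdlib Require Import Reals.
From Coquelicot Require Import Coquelicot.
From Stdlib Require Import Lra Psatz.
Open Scope R_scope.


Lemma alg (k r z u w : R) : 0 < k -> 0 < r ->
  k ^ 2 + 2 * Hfun k r z u w * F3fun k r z u w = 0 ->
  let h := Hfun k r z u w in
  let z0 := k / (4 * Rabs h) in
  h < 0 /\ 0 < z0 /\ r ^ 2 * z0 = 2 * (z0 ^ 2 - z ^ 2) /\ u * z0 * r = - z * w /\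
  w ^ 2 * (z0 ^ 2 + z ^ 2) ^ 2 = k * (z0 ^ 2 - z ^ 2) ^ 2.
Proof.
  intros Hk Hr HK h z0.
  set (D := r ^ 4 + 16 * z ^ 2).
  assert (HD : 0 < D) by (unfold D; assert (0 < r ^ 4) by (apply pow_lt; lra); nra).
  set (s := sqrt D).
  assert (Hs : 0 < s) by (apply sqrt_lt_R0; auto).
  assert (Hss : s * s = D) by (apply sqrt_sqrt; lra).
  set (v := w / r).
  assert (Hw : w = r * v) by (unfold v; field; lra).
  assert (HF : 0 <= F3fun k r z u w).
  { unfold F3fun; fold D s.
    assert (0 <= w ^ 2 / r ^ 2) by (apply Rmult_le_pos; [nra| apply Rlt_le, Rinv_0_lt_compat; nra]).
    assert (0 <= 2 * k / s) by (apply Rmult_le_pos; [lra| apply Rlt_le, Rinv_0_lt_compat; lra]).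
    apply Rplus_le_le_0_compat; [apply pow2_ge_0|]. apply Rmult_le_pos; [|lra]. apply Rmult_le_pos; [lra|apply pow2_ge_0]. }
  assert (Hh : h < 0).
  { unfold h. nra. }
  assert (Hz0 : 0 < z0).
  { unfold z0. rewrite Rabs_left by lra. apply Rdiv_lt_0_compat; lra. }
  assert (Hhz : 4 * h * z0 = - k).
  { unfold z0. rewrite Rabs_left by lra. field. lra. }
  set (X := v * (4 * z * u - r ^ 2 * v)).
  set (E1 := k * r ^ 2 / s + X).
  set (E2 := 2 * z * (u ^ 2 - v ^ 2) - r ^ 2 * u * v).
  assert (Hsos : k ^ 2 + 2 * Hfun k r z u w * F3fun k r z u w
     = E1 ^ 2 + E2 ^ 2 + k ^ 2 * (s * s - D) / (s * s)).
  { unfold Hfun, F3fun, E1, E2, X; fold D s. rewrite Hw. unfold D. field. split; lra. }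
  rewrite Hss, Rminus_diag in Hsos.
  assert (HE : E1 = 0 /\ E2 = 0).
  { assert (E1 ^ 2 + E2 ^ 2 = 0) by (rewrite HK in Hsos; lra). split; nra. }
  destruct HE as [HE1 HE2].
  assert (Hks : 0 < k * r ^ 2 / s).
  { apply Rdiv_lt_0_compat; [apply Rmult_lt_0_compat; [lra| apply pow_lt; lra]| lra]. }
  assert (Hv : v <> 0).
  { intro Hv0. unfold E1, X in HE1. rewrite Hv0 in HE1. lra. }
  assert (Hv2 : 0 < v ^ 2) by (rewrite <- Rsqr_pow2; apply Rsqr_pos_lt; auto).
  assert (HG : s * u * v + 2 * z * (u ^ 2 + v ^ 2) = 0).
  { assert (Hp : (s * u * v - 2 * z * (u ^ 2 + v ^ 2)) * (s * u * v + 2 * z * (u ^ 2 + v ^ 2))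
       = - E2 * (r ^ 2 * u * v + 2 * z * (u ^ 2 - v ^ 2)) + u^2 * v^2 * (s * s - D)).
    { unfold E2, D. ring. }
    rewrite HE2, Hss in Hp.
    replace (- 0 * (r ^ 2 * u * v + 2 * z * (u ^ 2 - v ^ 2)) + u ^ 2 * v ^ 2 * (D - D)) with 0 in Hp by ring.
    destruct (Rmult_integral _ _ Hp) as [Hc|Hc]; [|exact Hc].
    assert (Huv : u * v * X = 2 * z * v ^ 2 * (u ^ 2 + v ^ 2) + v ^ 2 * E2) by (unfold X, E2; ring).
    rewrite HE2 in Huv.
    assert (HX : X = - (k * r ^ 2 / s)) by (unfold E1 in HE1; lra).
    assert (Huv2 : u * v * (k * r ^ 2 / s + s * v ^ 2) = 0).
    { rewrite HX in Huv. replace (2 * z * v ^ 2 * (u ^ 2 + v ^ 2)) with (v ^ 2 * (2 * z * (u ^ 2 + v ^ 2))) in Huv by ring.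
      replace (2 * z * (u ^ 2 + v ^ 2)) with (s * u * v) in Huv by lra. lra. }
    assert (Hpos : 0 < k * r ^ 2 / s + s * v ^ 2) by (assert (0 < s * v ^ 2) by (apply Rmult_lt_0_compat; lra); lra).
    destruct (Rmult_integral _ _ Huv2) as [H0|H0]; [|lra].
    assert (s * u * v = 0) by (replace (s*u*v) with (s*(u*v)) by ring; rewrite H0; ring).
    lra. }
  assert (HkX : k * r ^ 2 = - (s * X)).
  { unfold E1 in HE1. apply (Rmult_eq_reg_r (/ s)); [|apply Rinv_neq_0_compat; lra].
    replace (k * r ^ 2 * / s) with (k * r ^ 2 / s) by reflexivity.
    replace (- (s * X) * / s) with (- X) by (field; lra). lra. }
  assert (Hinner : (4 * z * u - r ^ 2 * v) * (u * s + 4 * z * v) + 2 * z * r ^ 2 * (u ^ 2 + v ^ 2) = 0).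
  { replace ((4 * z * u - r ^ 2 * v) * (u * s + 4 * z * v) + 2 * z * r ^ 2 * (u ^ 2 + v ^ 2))
      with (s * (s * u * v + 2 * z * (u ^ 2 + v ^ 2)) + (s + r ^ 2) * E2 + u * v * (D - s * s))
      by (unfold E2, D; ring).
    rewrite HG, HE2, Hss. ring. }
  assert (HT : k * (u * s + 4 * z * v) = 2 * z * v * s * (u ^ 2 + v ^ 2)).
  { apply (Rmult_eq_reg_r (r ^ 2)); [|apply pow_nonzero; lra].
    replace (k * (u * s + 4 * z * v) * r ^ 2) with (k * r ^ 2 * (u * s + 4 * z * v)) by ring.
    rewrite HkX. unfold X.
    replace (- (s * (v * (4 * z * u - r ^ 2 * v))) * (u * s + 4 * z * v))
      with (2 * z * v * s * (u ^ 2 + v ^ 2) * r ^ 2 - s * v * ((4 * z * u - r ^ 2 * v) * (u * s + 4 * z * v) + 2 * z * r ^ 2 * (u ^ 2 + v ^ 2))) by ring.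
    rewrite Hinner. ring. }
  assert (Hhv : h = / 2 * (u ^ 2 + v ^ 2) - k / s).
  { unfold h, Hfun. fold D s. rewrite Hw. field. lra. }
  assert (Hku : k * u = 4 * h * z * v).
  { apply (Rmult_eq_reg_r s); [|lra]. rewrite Hhv.
    replace ((4 * (/ 2 * (u ^ 2 + v ^ 2) - k / s) * z * v) * s) with (2 * z * v * s * (u ^ 2 + v ^ 2) - 4 * k * z * v) by (field; lra).
    rewrite <- HT. ring. }
  assert (Huz : u * z0 = - z * v).
  { apply (Rmult_eq_reg_l k); [|lra].
    replace (k * (u * z0)) with (k * u * z0) by ring. rewrite Hku.
    replace (4 * h * z * v * z0) with ((4 * h * z0) * z * v) by ring. rewrite Hhz. ring. }
  assert (HP1 : r ^ 2 * z0 = 2 * (z0 ^ 2 - z ^ 2)).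
  { destruct (Req_dec z 0) as [Hz|Hz].
    - assert (Hu : u = 0).
      { rewrite Hz in Huz. apply (Rmult_eq_reg_r z0); lra. }
      assert (Hsr : s = r ^ 2).
      { assert (Hsq : s * s = r ^ 2 * r ^ 2) by (rewrite Hss; unfold D; rewrite Hz; ring).
        assert (0 < r ^ 2) by (apply pow_lt; lra). nra. }
      assert (Hvk : v ^ 2 = k / s).
      { unfold E1, X in HE1. rewrite Hu, Hz in HE1. rewrite Hsr in HE1 |- *.
        assert (0 < r ^ 2) by (apply pow_lt; lra).
        apply (Rmult_eq_reg_r (r ^ 2)); [|lra].
        replace (k / r ^ 2 * r ^ 2) with k by (field; lra).
        replace (k * r ^ 2 / r ^ 2) with k in HE1 by (field; lra). nra. }
      rewrite Hvk, Hu in Hhv.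
      assert (Hz0s : z0 = s / 2).
      { apply (Rmult_eq_reg_l (4 * h)); [|lra]. rewrite Hhz, Hhv. field. lra. }
      rewrite Hz0s, Hz, <- Hsr. field.
    - assert (Hz2 : z0 ^ 2 * E2 = z * v ^ 2 * (2 * z ^ 2 - 2 * z0 ^ 2 + r ^ 2 * z0)).
      { unfold E2. replace (z0 ^ 2 * (2 * z * (u ^ 2 - v ^ 2) - r ^ 2 * u * v))
          with (2 * z * ((u * z0) ^ 2 - v ^ 2 * z0 ^ 2) - r ^ 2 * (u * z0) * (v * z0)) by ring.
        rewrite Huz. ring. }
      rewrite HE2, Rmult_0_r in Hz2. symmetry in Hz2.
      apply Rmult_integral in Hz2. destruct Hz2 as [Hz2|Hz2]; [|lra].
      apply Rmult_integral in Hz2. destruct Hz2 as [Hz2|Hz2]; [lra|lra]. }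
  assert (Hzs : z0 * s = 2 * (z0 ^ 2 + z ^ 2)).
  { assert (Hsq : (z0 * s) * (z0 * s) = (2 * (z0 ^ 2 + z ^ 2)) * (2 * (z0 ^ 2 + z ^ 2))).
    { replace ((z0 * s) * (z0 * s)) with (z0 ^ 2 * (s * s)) by ring. rewrite Hss. unfold D.
      replace (z0 ^ 2 * (r ^ 4 + 16 * z ^ 2)) with ((r ^ 2 * z0) ^ 2 + 16 * z ^ 2 * z0 ^ 2) by ring.
      rewrite HP1. ring. }
    assert (0 < z0 * s) by (apply Rmult_lt_0_compat; lra).
    assert (0 < 2 * (z0 ^ 2 + z ^ 2)) by (assert (0 < z0 ^ 2) by (apply pow_lt; lra); assert (0 <= z ^ 2) by apply pow2_ge_0; lra).
    nra. }
  assert (HXz : X * z0 = - (v ^ 2 * (4 * z ^ 2 + r ^ 2 * z0))).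
  { unfold X. replace (v * (4 * z * u - r ^ 2 * v) * z0) with (v * (4 * z * (u * z0) - r ^ 2 * v * z0)) by ring.
    rewrite Huz. ring. }
  assert (Hm : k * r ^ 2 * z0 = s * v ^ 2 * (2 * (z0 ^ 2 + z ^ 2))).
  { rewrite HkX. replace (- (s * X) * z0) with (- s * (X * z0)) by ring. rewrite HXz.
    replace (4 * z ^ 2 + r ^ 2 * z0) with (2 * (z0 ^ 2 + z ^ 2)) by lra. ring. }
  assert (Hm2 : k * (r ^ 2 * z0) * z0 = 4 * (v ^ 2 * (z0 ^ 2 + z ^ 2) ^ 2)).
  { replace (k * (r ^ 2 * z0) * z0) with (k * r ^ 2 * z0 * z0) by ring. rewrite Hm.
    replace (s * v ^ 2 * (2 * (z0 ^ 2 + z ^ 2)) * z0) with ((z0 * s) * v ^ 2 * (2 * (z0 ^ 2 + z ^ 2))) by ring.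
    rewrite Hzs. ring. }
  repeat split; try assumption.
  - rewrite Hw. replace (u * z0 * r) with (r * (u * z0)) by ring. rewrite Huz. ring.
  - rewrite Hw. replace ((r * v) ^ 2 * (z0 ^ 2 + z ^ 2) ^ 2) with (r ^ 2 * (v ^ 2 * (z0 ^ 2 + z ^ 2) ^ 2)) by ring.
    apply (Rmult_eq_reg_l 4); [|lra].
    replace (4 * (r ^ 2 * (v ^ 2 * (z0 ^ 2 + z ^ 2) ^ 2))) with (r ^ 2 * (4 * (v ^ 2 * (z0 ^ 2 + z ^ 2) ^ 2))) by ring.
    rewrite <- Hm2.
    replace (r ^ 2 * (k * (r ^ 2 * z0) * z0)) with (k * (r ^ 2 * z0) ^ 2) by ring.
    rewrite HP1. ring.
Qed.

Lemma consH (k : R) (a b : Rbar) (r th z pR pS : R -> R) (t : R) :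
  is_solution k a b r th z pR pS -> Rbar_lt a t -> Rbar_lt t b ->
  is_derive (fun t => Hfun k (r t) (z t) (pR t) (pS t)) t 0 /\
  is_derive (fun t => F3fun k (r t) (z t) (pR t) (pS t)) t 0.
Proof.
  intros Hsol Ha Hb.
  destruct (Hsol t Ha Hb) as [Hr [Dr [Dth [Dz [DpR DpS]]]]].
  assert (HD : 0 < r t ^ 4 + 16 * z t ^ 2) by (assert (0 < r t ^ 4) by (apply pow_lt; lra); nra).
  assert (Hs : 0 < sqrt (r t ^ 4 + 16 * z t ^ 2)) by (apply sqrt_lt_R0; auto).
  split; unfold Hfun, F3fun; auto_derive.
  all: try (repeat split; first [eexists; eassumption | lra | idtac]).
  all: try (replace (r t * (r t * (r t * (r t * 1))) + 16 * (z t * (z t * 1))) with (r t ^ 4 + 16 * z t ^ 2) by ring).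
  all: try (apply Rgt_not_eq; lra).
  all: try (replace (r t * (r t * 1)) with (r t ^ 2) by ring; apply pow_nonzero; lra).
  all: replace (Derive (fun x => r x) t) with (pR t) by (symmetry; apply is_derive_unique; exact Dr).
  all: replace (Derive (fun x => z x) t) with (pS t / 2) by (symmetry; apply is_derive_unique; exact Dz).
  all: replace (Derive (fun x => pR x) t) with (Derive pR t) by reflexivity.
  all: replace (Derive (fun x => pS x) t) with (Derive pS t) by reflexivity.
  all: rewrite (is_derive_unique _ _ _ DpR).
  all: rewrite (is_derive_unique _ _ _ DpS).
  all: set (s := sqrt (r t ^ 4 + 16 * z t ^ 2)) in *.
  all: assert (HsD : s * s = r t ^ 4 + 16 * z t ^ 2) by (apply sqrt_sqrt; lra).
  all: rewrite <- HsD.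
  all: try (field; split; lra).
  all: field_simplify; try (split; lra).
  all: replace (s ^ 2) with (r t ^ 4 + 16 * z t ^ 2) by (rewrite <- HsD; ring).
  all: field; split; lra.
Qed.

Definition thf (m : R) : R := (exp m - 1) / (exp m + 1).
Definition phi (m : R) : R := m - thf m.
Definition dphi (m : R) : R := 1 - 2 * exp m / (exp m + 1) ^ 2.

Lemma thf_bound m : -1 < thf m < 1.
Proof.
  unfold thf. assert (He := exp_pos m). split.
  - apply Rmult_lt_reg_r with (exp m + 1); [lra|]. field_simplify; lra.
  - apply Rmult_lt_reg_r with (exp m + 1); [lra|]. field_simplify; lra.
Qed.

Lemma dphi_ge m : / 2 <= dphi m.
Proof.
  unfold dphi. assert (He := exp_pos m).
  replace (1 - 2 * exp m / (exp m + 1) ^ 2) with (/ 2 + (exp m - 1) ^ 2 / (2 * (exp m + 1) ^ 2)) by (field; lra).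
  assert (0 <= (exp m - 1) ^ 2 / (2 * (exp m + 1) ^ 2)); [|lra].
  apply Rmult_le_pos; [apply pow2_ge_0|]. apply Rlt_le, Rinv_0_lt_compat.
  assert (0 < (exp m + 1) ^ 2) by (apply pow_lt; lra). lra.
Qed.

Lemma phi_deriv m : is_derive phi m (dphi m).
Proof.
  unfold phi, thf, dphi. auto_derive.
  - assert (He := exp_pos m). lra.
  - assert (He := exp_pos m). field. lra.
Qed.

Lemma phi_incr x y : x < y -> phi x < phi y.
Proof.
  intros Hxy. apply (incr_function phi m_infty p_infty dphi); try easy.
  - intros t _ _. apply phi_deriv.
  - intros t _ _. assert (H := dphi_ge t). lra.
Qed.

Lemma phi_cont : continuity phi.
Proof.
  intro x. apply continuity_pt_filterlim. apply (@ex_derive_continuous R_AbsRing R_NormedModule).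
  eexists. apply phi_deriv.
Qed.

Lemma phi_surj (y : R) : { x : R | phi x = y }.
Proof.
  destruct (IVT_gen phi (y - 1) (y + 1) y phi_cont) as [x [_ Hx]].
  - assert (H1 := thf_bound (y - 1)). assert (H2 := thf_bound (y + 1)).
    unfold phi. rewrite Rmin_left, Rmax_right; lra.
  - exists x; exact Hx.
Qed.

Definition ginv (y : R) : R := proj1_sig (phi_surj y).

Lemma ginv_spec y : phi (ginv y) = y.
Proof. unfold ginv. destruct (phi_surj y); auto. Qed.

Lemma ginv_incr x y : x < y -> ginv x < ginv y.
Proof.
  intros Hxy. destruct (Rlt_or_le (ginv x) (ginv y)) as [H|H]; auto.
  destruct H as [H|H].
  - apply phi_incr in H. rewrite !ginv_spec in H. lra.
  - assert (phi (ginv y) = phi (ginv x)) by (rewrite H; auto). rewrite !ginv_spec in H0. lra.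
Qed.

Lemma ginv_phi x : ginv (phi x) = x.
Proof.
  destruct (Rtotal_order (ginv (phi x)) x) as [H|[H|H]]; auto.
  - apply phi_incr in H. rewrite ginv_spec in H. lra.
  - apply phi_incr in H. rewrite ginv_spec in H. lra.
Qed.

Lemma ginv_deriv y : is_derive ginv y (/ dphi (ginv y)).
Proof.
  assert (Dp : forall a, derivable_pt phi a).
  { intro a. exists (dphi a). apply is_derive_Reals, phi_deriv. }
  assert (Hc : continuity_pt ginv y).
  { apply (Ranalysis5.continuity_pt_recip_interv phi ginv (ginv y - 1) (ginv y + 1)).
    - lra.
    - intros; apply phi_incr; lra.
    - intros; unfold comp, id; apply ginv_spec.
    - intros x H1 H2. rewrite <- (ginv_phi (ginv y - 1)), <- (ginv_phi (ginv y + 1)).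
      split.
      + destruct H1 as [H1|H1]; [apply Rlt_le, ginv_incr; auto| rewrite H1; lra].
      + destruct H2 as [H2|H2]; [apply Rlt_le, ginv_incr; auto| rewrite H2; lra].
    - intros a _. apply continuity_pt_filterlim. apply (@ex_derive_continuous R_AbsRing R_NormedModule).
      eexists. apply phi_deriv.
    - assert (H1 : phi (ginv y - 1) < phi (ginv y)) by (apply phi_incr; lra).
      assert (H2 : phi (ginv y) < phi (ginv y + 1)) by (apply phi_incr; lra).
      rewrite ginv_spec in H1, H2. lra. }
  assert (Hi : ginv (y - 1) <= ginv y <= ginv (y + 1)) by (split; apply Rlt_le, ginv_incr; lra).
  assert (H := Ranalysis5.derivable_pt_lim_recip_interv phi ginv (y - 1) (y + 1) y
      (fun a _ => Dp a) Hc ltac:(lra) ltac:(lra) Hi).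
  rewrite (derive_pt_eq_0 phi (ginv y) (dphi (ginv y)) _ (proj1 (is_derive_Reals _ _ _) (phi_deriv _))) in H.
  apply is_derive_Reals.
  replace (/ dphi (ginv y)) with (1 / dphi (ginv y)) by (unfold Rdiv; ring).
  apply H.
  - intros; unfold comp, id; apply ginv_spec.
  - assert (H1 := dphi_ge (ginv y)). lra.
Qed.

Definition Zf (z0 : R) (M : R -> R) (t : R) : R := z0 * thf (M t).
Definition PSf (q z0 : R) (M : R -> R) (t : R) : R :=
  q * (z0 ^ 2 - Zf z0 M t ^ 2) / (z0 ^ 2 + Zf z0 M t ^ 2).
Definition Rf (z0 : R) (M : R -> R) (t : R) : R := sqrt (2 * (z0 ^ 2 - Zf z0 M t ^ 2) / z0).
Definition PRf (q z0 : R) (M : R -> R) (t : R) : R :=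
  - (Zf z0 M t * PSf q z0 M t) / (z0 * Rf z0 M t).
Definition THf (M : R -> R) (c2 : R) (t : R) : R := M t / 2 + c2.

Ltac pos := solve [ lra | apply Rmult_lt_0_compat; pos | apply pow_lt; pos
  | apply Rplus_lt_le_0_compat; [pos | apply pow2_ge_0]
  | apply Rplus_le_lt_0_compat; [apply pow2_ge_0 | pos] | apply Rinv_0_lt_compat; pos | nra ].
Ltac nz := apply Rgt_not_eq; pos.

Lemma ext (k z0 q c2 : R) (M : R -> R) : 0 < k -> 0 < z0 -> q * q = k ->
  (forall t, is_derive M t (q / (2 * z0) / dphi (M t))) ->
  is_solution k m_infty p_infty (Rf z0 M) (THf M c2) (Zf z0 M) (PRf q z0 M) (PSf q z0 M).
Proof.
  intros Hk Hz0 Hq DM t _ _.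
  remember (exp (M t)) as e eqn:Hedef.
  assert (He : 0 < e) by (rewrite Hedef; apply exp_pos).
  assert (Hz : Zf z0 M t = z0 * (e - 1) / (e + 1)) by (unfold Zf, thf; rewrite <- Hedef; field; lra).
  assert (Hex : exists w, 0 < w /\ w * w = 2 * z0 * e).
  { assert (H2 : 0 < 2 * z0 * e) by (apply Rmult_lt_0_compat; lra).
    exists (sqrt (2 * z0 * e)). split; [apply sqrt_lt_R0; lra| apply sqrt_sqrt; lra]. }
  destruct Hex as [w [Hw Hww]].
  assert (Hz0w : z0 = w * w / (2 * e)) by (rewrite Hww; field; lra).
  assert (HR : Rf z0 M t = 2 * w / (e + 1)).
  { unfold Rf. rewrite Hz.
    replace (2 * (z0 ^ 2 - (z0 * (e - 1) / (e + 1)) ^ 2) / z0) with ((2 * w / (e + 1)) ^ 2).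
    - apply sqrt_pow2. apply Rlt_le, Rdiv_lt_0_compat; lra.
    - rewrite Hz0w. field. split; lra. }
  assert (HR2 : Rf z0 M t ^ 2 = 2 * (z0 ^ 2 - Zf z0 M t ^ 2) / z0).
  { rewrite HR, Hz, Hz0w. field. split; lra. }
  assert (HsD : sqrt (Rf z0 M t ^ 4 + 16 * Zf z0 M t ^ 2) = 2 * (z0 ^ 2 + Zf z0 M t ^ 2) / z0).
  { replace (Rf z0 M t ^ 4 + 16 * Zf z0 M t ^ 2) with ((2 * (z0 ^ 2 + Zf z0 M t ^ 2) / z0) ^ 2).
    - apply sqrt_pow2. apply Rlt_le, Rdiv_lt_0_compat; [|lra].
      assert (0 < z0 ^ 2) by (apply pow_lt; lra). assert (0 <= Zf z0 M t ^ 2) by apply pow2_ge_0. lra.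
    - replace (Rf z0 M t ^ 4) with ((Rf z0 M t ^ 2) ^ 2) by ring. rewrite HR2. field. lra. }
  assert (dZ : is_derive (Zf z0 M) t (PSf q z0 M t / 2)).
  { unfold Zf, thf. auto_derive.
    - split; [eexists; apply DM|]; split; [eexists; apply DM|]; split; [rewrite <- Hedef; lra|easy].
    - replace (Derive (fun x => M x) t) with (q / (2 * z0) / dphi (M t)) by (symmetry; apply is_derive_unique, DM).
      unfold PSf, dphi. rewrite Hz. rewrite <- Hedef.
      replace (1 - 2 * e / (e + 1) ^ 2) with ((e * e + 1) / (e + 1) ^ 2) by (field; lra).
      assert (0 < e * e + 1) by nra.
      field. repeat split; try lra.
      apply Rgt_not_eq, Rplus_lt_le_0_compat; [apply pow_lt, Rmult_lt_0_compat; lra| apply pow2_ge_0]. }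
  assert (HZb : z0 ^ 2 - Zf z0 M t ^ 2 > 0).
  { rewrite Hz. replace (z0 ^ 2 - (z0 * (e - 1) / (e + 1)) ^ 2) with (4 * z0 ^ 2 * e / (e + 1) ^ 2) by (field; lra).
    apply Rdiv_lt_0_compat; [|apply pow_lt; lra]. apply Rmult_lt_0_compat; [|lra]. assert (0 < z0 ^ 2) by (apply pow_lt; lra). lra. }
  assert (dR : is_derive (Rf z0 M) t (PRf q z0 M t)).
  { unfold Rf. auto_derive.
    - split; [eexists; exact dZ|]. split; [|easy].
      replace (2 * (z0 * (z0 * 1) + - (Zf z0 M t * (Zf z0 M t * 1))) * / z0) with (2 * (z0 ^ 2 - Zf z0 M t ^ 2) / z0) by (unfold Rdiv; ring).
      apply Rdiv_lt_0_compat; lra.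
    - replace (Derive (fun x => Zf z0 M x) t) with (PSf q z0 M t / 2) by (symmetry; apply is_derive_unique, dZ).
      repeat match goal with |- context [sqrt ?X] => replace (sqrt X) with (Rf z0 M t) by (unfold Rf; f_equal; field; lra) end.
      unfold PRf, PSf. rewrite HR, Hz, Hz0w. field. repeat split; try lra.
      apply Rgt_not_eq, Rplus_lt_le_0_compat; [apply pow_lt; nra| apply pow2_ge_0]. }
  assert (HZ2 : 0 < z0 ^ 2 + Zf z0 M t ^ 2) by (assert (0 <= Zf z0 M t ^ 2) by apply pow2_ge_0; lra).
  assert (HRp : 0 < Rf z0 M t) by (rewrite HR; apply Rdiv_lt_0_compat; lra).
  assert (dPS : is_derive (PSf q z0 M) t
     (- (8 * k * Rf z0 M t ^ 2 * Zf z0 M t) /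
       ((Rf z0 M t ^ 4 + 16 * Zf z0 M t ^ 2) * sqrt (Rf z0 M t ^ 4 + 16 * Zf z0 M t ^ 2)))).
  { unfold PSf at 1. auto_derive.
    - repeat split; try (eexists; exact dZ).
      replace (z0 * (z0 * 1) + Zf z0 M t * (Zf z0 M t * 1)) with (z0 ^ 2 + Zf z0 M t ^ 2) by ring. apply Rgt_not_eq; lra.
    - replace (Derive (fun x => Zf z0 M x) t) with (PSf q z0 M t / 2) by (symmetry; apply is_derive_unique, dZ).
      rewrite HsD. unfold PSf. rewrite HR, Hz, <- Hq, Hz0w. field. repeat split; try nz. }
  assert (dPR : is_derive (PRf q z0 M) t
     (PSf q z0 M t ^ 2 / Rf z0 M t ^ 3 - 2 * k * Rf z0 M t ^ 3 /
       ((Rf z0 M t ^ 4 + 16 * Zf z0 M t ^ 2) * sqrt (Rf z0 M t ^ 4 + 16 * Zf z0 M t ^ 2)))).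
  { unfold PRf at 1. auto_derive.
    - repeat split; try (eexists; first [exact dZ | exact dPS | exact dR]).
      apply Rgt_not_eq. apply Rmult_lt_0_compat; lra.
    - replace (Derive (fun x => Zf z0 M x) t) with (PSf q z0 M t / 2) by (symmetry; apply is_derive_unique, dZ).
      replace (Derive (fun x => Rf z0 M x) t) with (PRf q z0 M t) by (symmetry; apply is_derive_unique, dR).
      replace (Derive (fun x => PSf q z0 M x) t) with (- (8 * k * Rf z0 M t ^ 2 * Zf z0 M t) /
       ((Rf z0 M t ^ 4 + 16 * Zf z0 M t ^ 2) * sqrt (Rf z0 M t ^ 4 + 16 * Zf z0 M t ^ 2))) by (symmetry; apply is_derive_unique, dPS).
      rewrite HsD. unfold PRf, PSf. rewrite HR, Hz, <- Hq, Hz0w. field. repeat split; try nz. }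
  assert (dTH : is_derive (THf M c2) t (PSf q z0 M t / Rf z0 M t ^ 2)).
  { unfold THf. auto_derive.
    - eexists; apply DM.
    - replace (Derive (fun x => M x) t) with (q / (2 * z0) / dphi (M t)) by (symmetry; apply is_derive_unique, DM).
      unfold dphi, PSf. rewrite <- Hedef, HR, Hz, Hz0w.
      replace (1 - 2 * e / (e + 1) ^ 2) with ((e * e + 1) / (e + 1) ^ 2) by (field; lra).
      field. repeat split; try nz. }
  cbv zeta. split; [exact HRp|]. split; [exact dR|]. split; [exact dTH|]. split; [exact dZ|]. split; [exact dPR|exact dPS].
Qed.

Lemma const_on (f : R -> R) (a b : Rbar) (t0 t : R) :
  (forall x : R, Rbar_lt a x -> Rbar_lt x b -> is_derive f x 0) ->
  Rbar_lt a t0 -> Rbar_lt t0 b -> Rbar_lt a t -> Rbar_lt t b -> f t = f t0.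
Proof.
  intros Hd Ha0 Hb0 Ha Hb.
  destruct (Rtotal_order t t0) as [H|[H|H]].
  - apply eq_is_derive; [|exact H]. intros x Hx. apply Hd.
    + apply Rbar_lt_le_trans with t; [exact Ha| simpl; lra].
    + apply Rbar_le_lt_trans with t0; [simpl; lra| exact Hb0].
  - subst; reflexivity.
  - symmetry. apply eq_is_derive; [|exact H]. intros x Hx. apply Hd.
    + apply Rbar_lt_le_trans with t0; [exact Ha0| simpl; lra].
    + apply Rbar_le_lt_trans with t; [simpl; lra| exact Hb].
Qed.

Lemma sign_const (f : R -> R) (a b : Rbar) (t0 : R) :
  (forall x : R, Rbar_lt a x -> Rbar_lt x b -> ex_derive f x /\ f x <> 0) ->
  Rbar_lt a t0 -> Rbar_lt t0 b ->
  (forall x : R, Rbar_lt a x -> Rbar_lt x b -> 0 < f x) \/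
  (forall x : R, Rbar_lt a x -> Rbar_lt x b -> f x < 0).
Proof.
  intros Hf Ha0 Hb0.
  assert (Hcont : forall x : R, Rbar_lt a x -> Rbar_lt x b -> continuity_pt f x).
  { intros x Ha Hb. apply continuity_pt_filterlim.
    apply (@ex_derive_continuous R_AbsRing R_NormedModule). apply (Hf x Ha Hb). }
  assert (Hnoch : forall x y : R, Rbar_lt a x -> Rbar_lt y b -> x < y -> f x * f y < 0 -> False).
  { intros x y Ha Hb Hxy Hs.
    assert (Hin : forall c, x <= c <= y -> Rbar_lt a c /\ Rbar_lt c b).
    { intros c Hc. split.
      - apply Rbar_lt_le_trans with x; [exact Ha| simpl; lra].
      - apply Rbar_le_lt_trans with y; [simpl; lra| exact Hb]. }
    destruct (Rlt_or_le (f x) 0) as [Hfx|Hfx].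
    - assert (Hfy : 0 < f y) by nra.
      destruct (Ranalysis5.IVT_interv f x y (fun c Hc => Hcont c (proj1 (Hin c Hc)) (proj2 (Hin c Hc))) Hxy Hfx Hfy) as [c [Hc Hfc]].
      apply (proj2 (Hf c (proj1 (Hin c Hc)) (proj2 (Hin c Hc)))); exact Hfc.
    - assert (Hfy : f y < 0) by nra.
      assert (Hfx' : 0 < f x) by (destruct Hfx as [Hfx|Hfx]; [lra| rewrite <- Hfx in Hs; lra]).
      destruct (Ranalysis5.IVT_interv (fun t => - f t) x y) as [c [Hc Hfc]].
      + intros c Hc. apply continuity_pt_opp. apply Hcont; apply Hin; auto.
      + exact Hxy.
      + lra.
      + lra.
      + apply (proj2 (Hf c (proj1 (Hin c Hc)) (proj2 (Hin c Hc)))). lra. }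
  assert (Hprod : forall x : R, Rbar_lt a x -> Rbar_lt x b -> 0 < f x * f t0).
  { intros x Ha Hb.
    assert (Hx0 := proj2 (Hf x Ha Hb)). assert (Ht0 := proj2 (Hf t0 Ha0 Hb0)).
    destruct (Rlt_or_le 0 (f x * f t0)) as [H|H]; auto.
    destruct H as [H|H].
    - exfalso. destruct (Rtotal_order x t0) as [Hl|[He|Hl]].
      + apply (Hnoch x t0 Ha Hb0 Hl H).
      + subst. nra.
      + apply (Hnoch t0 x Ha0 Hb Hl). lra.
    - exfalso. apply Rmult_integral in H. tauto. }
  assert (Ht0 := proj2 (Hf t0 Ha0 Hb0)).
  destruct (Rlt_or_le 0 (f t0)) as [H0|H0].
  - left. intros x Ha Hb. specialize (Hprod x Ha Hb). nra.
  - right. intros x Ha Hb. specialize (Hprod x Ha Hb). destruct H0 as [H0|H0]; [nra|contradiction].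
Qed.

Lemma ginv_bound y : y - 1 < ginv y < y + 1.
Proof.
  assert (H := ginv_spec y). unfold phi in H. assert (Hb := thf_bound (ginv y)). lra.
Qed.

Lemma thf_lim_p z0 eps : 0 < z0 -> 0 < eps -> exists L, forall m, L < m -> Rabs (z0 * thf m - z0) < eps.
Proof.
  intros Hz He. exists (ln (2 * z0 / eps)). intros m Hm.
  apply exp_increasing in Hm. rewrite exp_ln in Hm by (apply Rdiv_lt_0_compat; lra).
  assert (Hp := exp_pos m).
  unfold thf. replace (z0 * ((exp m - 1) / (exp m + 1)) - z0) with (- (2 * z0 / (exp m + 1))) by (field; lra).
  rewrite Rabs_Ropp, Rabs_right by (apply Rle_ge, Rlt_le, Rdiv_lt_0_compat; lra).
  apply Rmult_lt_reg_r with (exp m + 1); [lra|].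
  unfold Rdiv. rewrite Rmult_assoc, Rinv_l by lra.
  apply Rmult_lt_compat_r with (r := eps) in Hm; [|lra].
  unfold Rdiv in Hm. rewrite Rmult_assoc, Rinv_l in Hm by lra. nra.
Qed.

Lemma thf_lim_m z0 eps : 0 < z0 -> 0 < eps -> exists L, forall m, m < L -> Rabs (z0 * thf m - - z0) < eps.
Proof.
  intros Hz He. exists (ln (eps / (2 * z0))). intros m Hm.
  apply exp_increasing in Hm. rewrite exp_ln in Hm by (apply Rdiv_lt_0_compat; lra).
  assert (Hp := exp_pos m).
  unfold thf. replace (z0 * ((exp m - 1) / (exp m + 1)) - - z0) with (2 * z0 * exp m / (exp m + 1)) by (field; lra).
  rewrite Rabs_right by (apply Rle_ge, Rlt_le, Rdiv_lt_0_compat; nra).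
  apply Rmult_lt_reg_r with (exp m + 1); [lra|].
  unfold Rdiv. rewrite Rmult_assoc, Rinv_l by lra.
  apply Rmult_lt_compat_r with (r := 2 * z0) in Hm; [|lra].
  unfold Rdiv in Hm. rewrite Rmult_assoc, Rinv_l in Hm by lra. nra.
Qed.

Lemma zlim_pos z0 al be : 0 < z0 -> 0 < al ->
  is_lim (fun t => z0 * thf (ginv (al * t + be))) p_infty z0 /\
  is_lim (fun t => z0 * thf (ginv (al * t + be))) m_infty (- z0).
Proof.
  intros Hz Hal. split; apply is_lim_spec; intros eps.
  - destruct (thf_lim_p z0 eps Hz (cond_pos eps)) as [L HL].
    exists ((L + 1 - be) / al). intros x Hx. apply HL.
    assert (Hb := ginv_bound (al * x + be)).
    apply Rmult_lt_compat_l with (r := al) in Hx; [|lra].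
    replace (al * ((L + 1 - be) / al)) with (L + 1 - be) in Hx by (field; lra). lra.
  - destruct (thf_lim_m z0 eps Hz (cond_pos eps)) as [L HL].
    exists ((L - 1 - be) / al). intros x Hx. apply HL.
    assert (Hb := ginv_bound (al * x + be)).
    apply Rmult_lt_compat_l with (r := al) in Hx; [|lra].
    replace (al * ((L - 1 - be) / al)) with (L - 1 - be) in Hx by (field; lra). lra.
Qed.

Lemma zlim_neg z0 al be : 0 < z0 -> al < 0 ->
  is_lim (fun t => z0 * thf (ginv (al * t + be))) p_infty (- z0) /\
  is_lim (fun t => z0 * thf (ginv (al * t + be))) m_infty z0.
Proof.
  intros Hz Hal. split; apply is_lim_spec; intros eps.
  - destruct (thf_lim_m z0 eps Hz (cond_pos eps)) as [L HL].
    exists ((L - 1 - be) / al). intros x Hx. apply HL.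
    assert (Hb := ginv_bound (al * x + be)).
    apply Rmult_lt_gt_compat_neg_l with (r := al) in Hx; [|lra].
    replace (al * ((L - 1 - be) / al)) with (L - 1 - be) in Hx by (field; lra). lra.
  - destruct (thf_lim_p z0 eps Hz (cond_pos eps)) as [L HL].
    exists ((L + 1 - be) / al). intros x Hx. apply HL.
    assert (Hb := ginv_bound (al * x + be)).
    apply Rmult_lt_gt_compat_neg_l with (r := al) in Hx; [|lra].
    replace (al * ((L + 1 - be) / al)) with (L + 1 - be) in Hx by (field; lra). lra.
Qed.

Theorem theorem6 (k : R) (a b : Rbar) (r th z pR pS : R -> R) (t0 : R) :
  0 < k ->
  is_maximal_solution k a b r th z pR pS ->
  Rbar_lt a t0 -> Rbar_lt t0 b ->
  k ^ 2 + 2 * Hfun k (r t0) (z t0) (pR t0) (pS t0)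
            * F3fun k (r t0) (z t0) (pR t0) (pS t0) = 0 ->
  let z0 := k / (4 * Rabs (Hfun k (r t0) (z t0) (pR t0) (pS t0))) in
  (* the solution exists for all times: infinite time to reach the endpoints *)
  a = m_infty /\ b = p_infty /\
  (* the trajectory lies on the explicit curve *)
  (forall t : R,
     Rabs (z t) < z0 /\
     r t = sqrt (2 * (z0 ^ 2 - z t ^ 2) / z0)) /\
  (exists c : R, forall t : R,
     th t = / 2 * ln ((z0 + z t) / (z0 - z t)) + c) /\
  (* monotone in theta *)
  ((forall s t : R, s < t -> th s < th t) \/
   (forall s t : R, s < t -> th t < th s)) /\
  (* monotone in z, connecting (0, -z0) and (0, z0) as t -> -oo / +oo *)
  (((forall s t : R, s < t -> z s < z t) /\
    is_lim z p_infty z0 /\ is_lim z m_infty (- z0)) \/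
   ((forall s t : R, s < t -> z t < z s) /\
    is_lim z p_infty (- z0) /\ is_lim z m_infty z0)).
Proof.
  intros Hk [Hsol Hmax] Ha0 Hb0 HJ z0.
  assert (Hz0def : z0 = k / (4 * Rabs (Hfun k (r t0) (z t0) (pR t0) (pS t0)))) by reflexivity.
  clearbody z0.
  remember (Hfun k (r t0) (z t0) (pR t0) (pS t0)) as h eqn:Hh.
  remember (F3fun k (r t0) (z t0) (pR t0) (pS t0)) as f3 eqn:Hf3.
  assert (Hcons : forall t : R, Rbar_lt a t -> Rbar_lt t b ->
     Hfun k (r t) (z t) (pR t) (pS t) = h /\ F3fun k (r t) (z t) (pR t) (pS t) = f3).
  { intros t Ha Hb. rewrite Hh, Hf3. split.
    - apply (const_on (fun t => Hfun k (r t) (z t) (pR t) (pS t)) a b t0 t); auto.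
      intros x Hxa Hxb. apply (consH k a b r th z pR pS x Hsol Hxa Hxb).
    - apply (const_on (fun t => F3fun k (r t) (z t) (pR t) (pS t)) a b t0 t); auto.
      intros x Hxa Hxb. apply (consH k a b r th z pR pS x Hsol Hxa Hxb). }
  assert (Hpt : forall t : R, Rbar_lt a t -> Rbar_lt t b ->
     h < 0 /\ 0 < z0 /\ r t ^ 2 * z0 = 2 * (z0 ^ 2 - z t ^ 2) /\ pR t * z0 * r t = - z t * pS t /\
     pS t ^ 2 * (z0 ^ 2 + z t ^ 2) ^ 2 = k * (z0 ^ 2 - z t ^ 2) ^ 2).
  { intros t Ha Hb.
    destruct (Hcons t Ha Hb) as [Ht1 Ht2].
    assert (Hrt : 0 < r t) by (apply (Hsol t Ha Hb)).
    assert (HJt : k ^ 2 + 2 * Hfun k (r t) (z t) (pR t) (pS t) * F3fun k (r t) (z t) (pR t) (pS t) = 0)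
      by (rewrite Ht1, Ht2; exact HJ).
    assert (HA := alg k (r t) (z t) (pR t) (pS t) Hk Hrt HJt). cbv zeta in HA.
    rewrite Ht1 in HA. rewrite <- Hz0def in HA. exact HA. }
  destruct (Hpt t0 Ha0 Hb0) as [Hhneg [Hz0 _]].
  assert (Hzb : forall t : R, Rbar_lt a t -> Rbar_lt t b -> 0 < z0 ^ 2 - z t ^ 2).
  { intros t Ha Hb. destruct (Hpt t Ha Hb) as [_ [_ [H1 _]]].
    assert (Hrt : 0 < r t) by (apply (Hsol t Ha Hb)).
    assert (0 < r t ^ 2 * z0) by (apply Rmult_lt_0_compat; [apply pow_lt|]; lra). lra. }
  assert (HpS0 : forall t : R, Rbar_lt a t -> Rbar_lt t b -> ex_derive pS t /\ pS t <> 0).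
  { intros t Ha Hb. split.
    - eexists. apply (Hsol t Ha Hb).
    - intro H0. destruct (Hpt t Ha Hb) as [_ [_ [_ [_ H1]]]]. rewrite H0 in H1.
      specialize (Hzb t Ha Hb).
      assert (0 < k * (z0 ^ 2 - z t ^ 2) ^ 2) by (apply Rmult_lt_0_compat; [lra| apply pow_lt; lra]).
      replace (0 ^ 2 * (z0 ^ 2 + z t ^ 2) ^ 2) with 0 in H1 by ring. lra. }
  assert (Hq : exists q, q * q = k /\ (forall t : R, Rbar_lt a t -> Rbar_lt t b -> pS t = q * (z0 ^ 2 - z t ^ 2) / (z0 ^ 2 + z t ^ 2)) /\ ((0 < q /\ forall t : R, Rbar_lt a t -> Rbar_lt t b -> 0 < pS t) \/
      (q < 0 /\ forall t : R, Rbar_lt a t -> Rbar_lt t b -> pS t < 0))).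
  { assert (Hsk : 0 < sqrt k) by (apply sqrt_lt_R0; lra).
    assert (Hskk : sqrt k * sqrt k = k) by (apply sqrt_sqrt; lra).
    assert (Hform : forall q (t : R), q * q = k -> Rbar_lt a t -> Rbar_lt t b -> 0 < q * pS t ->
        pS t = q * (z0 ^ 2 - z t ^ 2) / (z0 ^ 2 + z t ^ 2)).
    { intros q t Hqq Ha Hb Hs. destruct (Hpt t Ha Hb) as [_ [_ [_ [_ H1]]]].
      specialize (Hzb t Ha Hb).
      assert (HZ2 : 0 < z0 ^ 2 + z t ^ 2) by (assert (0 <= z t ^ 2) by apply pow2_ge_0; lra).
      apply (Rmult_eq_reg_r (z0 ^ 2 + z t ^ 2)); [|lra].
      replace (q * (z0 ^ 2 - z t ^ 2) / (z0 ^ 2 + z t ^ 2) * (z0 ^ 2 + z t ^ 2)) with (q * (z0 ^ 2 - z t ^ 2)) by (field; lra).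
      set (X := pS t * (z0 ^ 2 + z t ^ 2)). set (Y := q * (z0 ^ 2 - z t ^ 2)).
      assert (HXY : X * X = Y * Y) by (unfold X, Y; rewrite <- Hqq in H1; nra).
      assert (HXYp : 0 < X * Y).
      { unfold X, Y. replace (pS t * (z0 ^ 2 + z t ^ 2) * (q * (z0 ^ 2 - z t ^ 2))) with
          ((q * pS t) * ((z0 ^ 2 + z t ^ 2) * (z0 ^ 2 - z t ^ 2))) by ring.
        apply Rmult_lt_0_compat; [lra| apply Rmult_lt_0_compat; lra]. }
      clearbody X Y.
      assert (Hm : (X - Y) * (X + Y) = 0) by (ring_simplify; lra).
      apply Rmult_integral in Hm. destruct Hm as [Hm|Hm]; [lra|].
      exfalso. assert (HY : Y = - X) by lra. rewrite HY in HXYp.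
      assert (0 <= X * X) by apply Rle_0_sqr. lra. }
    destruct (sign_const pS a b t0 HpS0 Ha0 Hb0) as [Hp|Hn].
    - exists (sqrt k). split; [exact Hskk|]. split.
      + intros t Ha Hb. apply Hform; auto. apply Rmult_lt_0_compat; auto.
      + left. split; [exact Hsk| exact Hp].
    - assert (Hskk' : - sqrt k * - sqrt k = k) by (replace (- sqrt k * - sqrt k) with (sqrt k * sqrt k) by ring; exact Hskk).
      exists (- sqrt k). split; [exact Hskk'|]. split.
      + intros t Ha Hb. apply Hform; auto. specialize (Hn t Ha Hb).
        replace (- sqrt k * pS t) with (sqrt k * (- pS t)) by ring. apply Rmult_lt_0_compat; lra.
      + right. split; [lra| exact Hn]. }
  destruct Hq as [q [Hqq [HpS Hsign]]].
  assert (Hq0 : q <> 0) by (intro; subst; lra).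
  assert (Hzz : forall t : R, Rbar_lt a t -> Rbar_lt t b -> 0 < z0 - z t /\ 0 < z0 + z t).
  { intros t Ha Hb. specialize (Hzb t Ha Hb).
    destruct (Rlt_or_le 0 (z0 - z t)); destruct (Rlt_or_le 0 (z0 + z t)); split; try lra; nra. }
  assert (Dm : forall t : R, Rbar_lt a t -> Rbar_lt t b ->
     is_derive (fun t => phi (ln ((z0 + z t) / (z0 - z t))) - q / (2 * z0) * t) t 0).
  { intros t Ha Hb. destruct (Hzz t Ha Hb) as [Hz1 Hz2].
    destruct (Hsol t Ha Hb) as [_ [_ [_ [Dz _]]]].
    assert (Hq1 : 0 < (z0 + z t) / (z0 - z t)) by (apply Rdiv_lt_0_compat; lra).
    unfold phi, thf. auto_derive.
    - repeat split; try (eexists; exact Dz); try lra. all: try (apply Rdiv_lt_0_compat; lra). apply Rgt_not_eq. assert (Hep := exp_pos (ln ((z0 + z t) * / (z0 + - z t)))). lra.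
    - replace (Derive (fun x => z x) t) with (pS t / 2) by (symmetry; apply is_derive_unique, Dz).
      rewrite exp_ln by (apply Rdiv_lt_0_compat; lra). rewrite (HpS t Ha Hb). field. repeat split; try lra.
      apply Rgt_not_eq. assert (0 <= z t ^ 2) by apply pow2_ge_0. assert (0 < z0 ^ 2) by (apply pow_lt; lra). lra. }
  remember (phi (ln ((z0 + z t0) / (z0 - z t0))) - q / (2 * z0) * t0) as be eqn:Hbe.
  assert (Hphi : forall t : R, Rbar_lt a t -> Rbar_lt t b ->
     phi (ln ((z0 + z t) / (z0 - z t))) = q / (2 * z0) * t + be).
  { intros t Ha Hb. rewrite Hbe.
    assert (H := const_on (fun t => phi (ln ((z0 + z t) / (z0 - z t))) - q / (2 * z0) * t) a b t0 t Dm Ha0 Hb0 Ha Hb).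
    simpl in H. lra. }
  assert (Dth : forall t : R, Rbar_lt a t -> Rbar_lt t b ->
     is_derive (fun t => th t - ln ((z0 + z t) / (z0 - z t)) / 2) t 0).
  { intros t Ha Hb. destruct (Hzz t Ha Hb) as [Hz1 Hz2].
    destruct (Hsol t Ha Hb) as [Hrt [_ [Dth [Dz _]]]].
    destruct (Hpt t Ha Hb) as [_ [_ [Hr2 _]]].
    auto_derive.
    - repeat split; try (eexists; first [exact Dz | exact Dth]); try lra.
      apply Rdiv_lt_0_compat; lra.
    - replace (Derive (fun x => z x) t) with (pS t / 2) by (symmetry; apply is_derive_unique, Dz).
      replace (Derive (fun x => th x) t) with (pS t / r t ^ 2) by (symmetry; apply is_derive_unique, Dth).
      replace (r t ^ 2) with (2 * (z0 ^ 2 - z t ^ 2) / z0) by (apply (Rmult_eq_reg_r z0); [rewrite Hr2; field|]; lra).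
      field. repeat split; try lra. specialize (Hzb t Ha Hb). lra. }
  remember (th t0 - ln ((z0 + z t0) / (z0 - z t0)) / 2) as c2 eqn:Hc2.
  assert (Hth : forall t : R, Rbar_lt a t -> Rbar_lt t b ->
     th t = / 2 * ln ((z0 + z t) / (z0 - z t)) + c2).
  { intros t Ha Hb. rewrite Hc2.
    assert (H := const_on (fun t => th t - ln ((z0 + z t) / (z0 - z t)) / 2) a b t0 t Dth Ha0 Hb0 Ha Hb).
    simpl in H. lra. }
  set (Mg := fun t => ginv (q / (2 * z0) * t + be)).
  assert (DM : forall t, is_derive Mg t (q / (2 * z0) / dphi (Mg t))).
  { intros t. unfold Mg.
    assert (Hl : is_derive (fun t => q / (2 * z0) * t + be) t (q / (2 * z0))) by (auto_derive; [easy| ring]).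
    assert (H := is_derive_comp ginv (fun t => q / (2 * z0) * t + be) t _ _ (ginv_deriv _) Hl).
    replace (q / (2 * z0) / dphi (ginv (q / (2 * z0) * t + be))) with (scal (q / (2 * z0)) (/ dphi (ginv (q / (2 * z0) * t + be)))).
    - exact H.
    - reflexivity. }
  assert (HE := ext k z0 q c2 Mg Hk Hz0 Hqq DM).
  assert (Hagree : forall t : R, Rbar_lt a t -> Rbar_lt t b ->
    Rf z0 Mg t = r t /\ THf Mg c2 t = th t /\ Zf z0 Mg t = z t /\ PRf q z0 Mg t = pR t /\ PSf q z0 Mg t = pS t).
  { intros t Ha Hb. destruct (Hzz t Ha Hb) as [Hz1 Hz2].
    destruct (Hpt t Ha Hb) as [_ [_ [Hr2 [HpR _]]]].
    assert (Hrt : 0 < r t) by apply (Hsol t Ha Hb).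
    assert (HMg : Mg t = ln ((z0 + z t) / (z0 - z t))).
    { unfold Mg. rewrite <- (Hphi t Ha Hb). apply ginv_phi. }
    assert (HZ : Zf z0 Mg t = z t).
    { unfold Zf, thf. rewrite HMg, exp_ln by (apply Rdiv_lt_0_compat; lra). field. lra. }
    assert (HPS : PSf q z0 Mg t = pS t) by (unfold PSf; rewrite HZ; symmetry; apply HpS; auto).
    assert (HR : Rf z0 Mg t = r t).
    { unfold Rf. rewrite HZ. rewrite <- (sqrt_pow2 (r t)) by lra. f_equal.
      apply (Rmult_eq_reg_r z0); [rewrite Hr2; field|]; lra. }
    split; [exact HR|]. split; [|split; [exact HZ|split; [|exact HPS]]].
    - unfold THf. rewrite HMg, (Hth t Ha Hb). field.
    - unfold PRf. rewrite HZ, HPS, HR. apply (Rmult_eq_reg_r (z0 * r t)).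
      + rewrite Rmult_assoc in HpR. rewrite HpR. field. split; lra.
      + apply Rgt_not_eq, Rmult_lt_0_compat; lra. }
  destruct (Hmax m_infty p_infty _ _ _ _ _ HE) as [Ham Hbp].
  { destruct a; simpl; auto. }
  { destruct b; simpl; auto. }
  { exact Hagree. }
  subst a b.
  assert (Hzl : forall y : R, z0 * thf (ginv (q / (2 * z0) * y + be)) = z y).
  { intros y. apply (Hagree y I I). }
  split; [reflexivity|]. split; [reflexivity|]. split.
  { intros t. destruct (Hpt t I I) as [_ [_ [Hr2 _]]]. destruct (Hzz t I I) as [Hz1 Hz2].
    assert (Hrt : 0 < r t) by apply (Hsol t I I).
    split.
    - apply Rabs_def1; lra.
    - rewrite <- (sqrt_pow2 (r t)) at 1 by lra. f_equal.
      apply (Rmult_eq_reg_r z0); [rewrite Hr2; field|]; lra. }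
  split.
  { exists c2. intros t. apply Hth; exact I. }
  assert (Hal : forall x, q / (2 * z0) * x = x * q / (2 * z0)) by (intros; field; lra).
  destruct Hsign as [[Hqp Hp]|[Hqn Hn]].
  - split.
    + left. intros s t Hst.
      apply (incr_function th m_infty p_infty (fun t => pS t / r t ^ 2)); try easy.
      * intros x _ _. apply (Hsol x I I).
      * intros x _ _. assert (0 < r x) by apply (Hsol x I I).
        apply Rdiv_lt_0_compat; [apply Hp; exact I| apply pow_lt; lra].
    + left. split; [|split].
      * intros s t Hst. apply (incr_function z m_infty p_infty (fun t => pS t / 2)); try easy.
        -- intros x _ _. apply (Hsol x I I).
        -- intros x _ _. assert (0 < pS x) by (apply Hp; exact I). lra.
      * apply (is_lim_ext _ _ _ _ Hzl). apply (zlim_pos z0 (q / (2 * z0)) be Hz0).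
        apply Rdiv_lt_0_compat; lra.
      * apply (is_lim_ext _ _ _ _ Hzl). apply (zlim_pos z0 (q / (2 * z0)) be Hz0).
        apply Rdiv_lt_0_compat; lra.
  - split.
    + right. intros s t Hst. apply Ropp_lt_cancel.
      apply (incr_function (fun t => - th t) m_infty p_infty (fun t => - (pS t / r t ^ 2))); try easy.
      * intros x _ _. exact (@is_derive_opp R_AbsRing R_NormedModule th x _ (proj1 (proj2 (proj2 (Hsol x I I))))).
      * intros x _ _. assert (0 < r x) by apply (Hsol x I I).
        assert (pS x / r x ^ 2 < 0); [|lra].
        assert (0 < - pS x / r x ^ 2); [|unfold Rdiv in *; lra].
        apply Rdiv_lt_0_compat; [assert (pS x < 0) by (apply Hn; exact I); lra| apply pow_lt; lra].
    + right. split; [|split].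
      * intros s t Hst. apply Ropp_lt_cancel.
        apply (incr_function (fun t => - z t) m_infty p_infty (fun t => - (pS t / 2))); try easy.
        -- intros x _ _. exact (@is_derive_opp R_AbsRing R_NormedModule z x _ (proj1 (proj2 (proj2 (proj2 (Hsol x I I)))))).
        -- intros x _ _. assert (pS x < 0) by (apply Hn; exact I). lra.
      * apply (is_lim_ext _ _ _ _ Hzl). apply (zlim_neg z0 (q / (2 * z0)) be Hz0).
        assert (0 < - q / (2 * z0)) by (apply Rdiv_lt_0_compat; lra). unfold Rdiv in *. lra.
      * apply (is_lim_ext _ _ _ _ Hzl). apply (zlim_neg z0 (q / (2 * z0)) be Hz0).
        assert (0 < - q / (2 * z0)) by (apply Rdiv_lt_0_compat; lra). unfold Rdiv in *. lra.
Qed.
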